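(* Let $n\geq 2$ and let $\mathcal{G}=(\mathcal{V},\mathcal{E})$ be a directed graph on $\mathcal{V}=\{1,\ldots,n\}$ in which every node has at least one outgoing edge, with hyperlink matrix $A$, let $m\in(0,1)$, and let $x^*$ be the PageRank vector. Consider the following randomized algorithm. Initially $x_i(0)=z_i(0)=m/n$ for all $i\in\mathcal{V}$. At each time $k\geq 0$, a page $\theta(k)\in\mathcal{V}$ is selected, the sequence $\{\theta(k)\}$ being i.i.d. with $\mathrm{Prob}\{\theta(k)=i\}=1/n$ for every $i\in\mathcal{V}$, and each page $i\in\mathcal{V}$ updates $$x_i(k+1)=\begin{cases}x_i(k)+\frac{1-m}{n_{\theta(k)}}z_{\theta(k)}(k)&\text{if } i\in\mathcal{L}^{\text{out}}_{\theta(k)},\\ x_i(k)&\text{otherwise,}\end{cases}$$ $$z_i(k+1)=\begin{cases}0&\text{if } i=\theta(k),\\ z_i(k)+\frac{1-m}{n_{\theta(k)}}z_{\theta(k)}(k)&\text{if } i\in\mathcal{L}^{\text{out}}_{\theta(k)},\\ z_i(k)&\text{otherwise.}\end{cases}$$ Then $x(k)\to x^*$ as $k\to\infty$ with probability $1$. Moreover: (i) $x(k)\leq x(k+1)\leq x^*$ for all $k\geq 0$; (ii) $\mathbb{E}[x(k)]\to x^*$ as $k\to\infty$, and this convergence is exponential, i.e., there exist $C>0$ and $\rho\in(0,1)$ with $\|\mathbb{E}[x(k)]-x^*\|\leq C\rho^k$ for all $k\geq 0$.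
   Context: Write $(i,j)\in\mathcal{E}$ if page $i$ has a link to page $j$. $\mathcal{L}_j^{\text{out}}=\{i:(j,i)\in\mathcal{E}\}$ and $n_j=|\mathcal{L}_j^{\text{out}}|\geq 1$. The hyperlink matrix $A=(a_{ij})$ is defined by $a_{ij}=1/n_j$ if $i\in\mathcal{L}_j^{\text{out}}$ and $a_{ij}=0$ otherwise (column stochastic). The PageRank vector $x^*$ satisfies $x^*=(1-m)Ax^*+\frac{m}{n}\mathbf{1}_n$ and $\mathbf{1}_n^Tx^*=1$. Here $x(k)=(x_1(k),\ldots,x_n(k))^T$; inequalities between vectors are entrywise. *)

(* Defs.v *)
From HB Require Import structures.
From mathcomp Require Import all_boot all_order all_algebra.
From mathcomp Require Import all_classical all_reals all_analysis.
Set Implicit Arguments. Unset Strict Implicit. Unset Printing Implicit Defensive.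
Import Order.TTheory GRing.Theory Num.Theory.
Import numFieldNormedType.Exports.
Local Open Scope classical_set_scope.
Local Open Scope ring_scope.

(* A directed graph on 'I_n is a relation E : rel 'I_n, E i j <-> (i,j) in E,
   i.e. page i links to page j. *)

Definition Lout n (E : rel 'I_n) (j : 'I_n) : {set 'I_n} := [set i | E j i].
Definition outdeg n (E : rel 'I_n) (j : 'I_n) : nat := #|Lout E j|.

Definition hyperlink (R : fieldType) n (E : rel 'I_n) : 'M[R]_n :=
  \matrix_(i, j) (if i \in Lout E j then (outdeg E j)%:R^-1 else 0).

Definition pr_step (R : fieldType) n (E : rel 'I_n) (m : R) (th : 'I_n)
  (s : ('I_n -> R) * ('I_n -> R)) : ('I_n -> R) * ('I_n -> R) :=
  let x := s.1 in let z := s.2 in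
  let c := (1 - m) / (outdeg E th)%:R * z th in
  (fun i => if i \in Lout E th then x i + c else x i,
   fun i => if i == th then 0 else if i \in Lout E th then z i + c else z i).

Fixpoint pr_state (R : fieldType) n (E : rel 'I_n) (m : R)
  (theta : nat -> 'I_n) (k : nat) : ('I_n -> R) * ('I_n -> R) :=
  match k with
  | 0 => (fun _ => m / n%:R, fun _ => m / n%:R)
  | k'.+1 => pr_step E m (theta k') (pr_state E m theta k')
  end.

Definition pr_x (R : fieldType) n (E : rel 'I_n) (m : R)
  (theta : nat -> 'I_n) (k : nat) : 'I_n -> R := (pr_state E m theta k).1.

Definition iid_uniform_seq (R : realType) d (T : measurableType d)
  (P : probability T R) n (theta : nat -> T -> 'I_n) : Prop :=
  (forall k i, measurable (theta k @^-1` [set i])) /\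
  (forall k i, P (theta k @^-1` [set i]) = (n%:R^-1)%:E) /\
  (forall (s : seq nat) (f : nat -> 'I_n), uniq s ->
     P (\big[setI/setT]_(k <- s) (theta k @^-1` [set f k])) =
     (\prod_(k <- s) P (theta k @^-1` [set f k]))%E).

(* Main.v *)
Require Import Defs.
From HB Require Import structures.
From mathcomp Require Import all_boot all_order all_algebra.
From mathcomp Require Import all_classical all_reals all_analysis.
From mathcomp Require Import ring lra measurable_realfun.
Import Order.TTheory GRing.Theory Num.Theory.
Import numFieldNormedType.Exports.
Local Open Scope classical_set_scope.
Local Open Scope ring_scope.

Section Det.
Variables (R : realType) (n : nat) (E : rel 'I_n) (m : R) (xs : 'I_n -> R).
Hypothesis noloop : forall i, ~~ E i i.
Hypothesis deg1 : forall j, (1 <= outdeg E j)%N.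
Hypothesis m0 : 0 < m.
Hypothesis m1 : m < 1.
Hypothesis hfix : forall i, xs i = (1 - m) * \sum_j hyperlink R E i j * xs j + m / n%:R.

Lemma Aij i j : hyperlink R E i j = (E j i)%:R / (outdeg E j)%:R.
Proof. by rewrite mxE inE; case: (E j i); rewrite ?mul1r ?mul0r. Qed.

Lemma sum_delta (F : 'I_n -> R) k : \sum_j (j == k)%:R * F j = F k.
Proof.
rewrite (bigD1 k) //= eqxx mul1r big1 ?addr0 // => j /negbTE ->.
by rewrite mul0r.
Qed.

Lemma sumE j : \sum_i ((E j i)%:R : R) = (outdeg E j)%:R.
Proof.
rewrite -natr_sum /outdeg -sum1_card [in RHS]big_mkcond /=.
by congr (_%:R); apply: eq_bigr => i _; rewrite inE; case: (E j i).
Qed.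

Lemma outdeg_neq0 j : ((outdeg E j)%:R : R) != 0.
Proof. by rewrite pnatr_eq0 -lt0n deg1. Qed.

Lemma colsum j : \sum_i hyperlink R E i j = 1.
Proof.
under eq_bigr do rewrite Aij.
by rewrite -mulr_suml sumE divff // outdeg_neq0.
Qed.

Definition cc th (st : ('I_n -> R) * ('I_n -> R)) :=
  (1 - m) / (outdeg E th)%:R * st.2 th.

Lemma step1 th st i : (pr_step E m th st).1 i = st.1 i + (E th i)%:R * cc th st.
Proof. by rewrite /pr_step /= inE; case: (E th i); rewrite ?mul1r ?mul0r ?addr0. Qed.

Lemma step2 th st i : (pr_step E m th st).2 i =
  st.2 i - (i == th)%:R * st.2 th + (E th i)%:R * cc th st.
Proof.
rewrite /pr_step /= inE; case: eqP => [->|_].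
  by rewrite (negbTE (noloop th)) mul1r mul0r addr0 subrr.
by case: (E th i); rewrite ?mul1r ?mul0r ?addr0 ?subr0.
Qed.

Definition zsum (st : ('I_n -> R) * ('I_n -> R)) := \sum_i st.2 i.

Lemma zsum_step th st : zsum (pr_step E m th st) = zsum st - m * st.2 th.
Proof.
rewrite /zsum; under eq_bigr do rewrite step2.
rewrite big_split sumrB /= sum_delta -mulr_suml sumE /cc.
have := outdeg_neq0 th; move: (outdeg E th)%:R => d hd.
by field.
Qed.

Definition Pos (st : ('I_n -> R) * ('I_n -> R)) := forall i, 0 <= st.2 i.

Lemma cc_ge0 th st : Pos st -> 0 <= cc th st.
Proof.
move=> hp; rewrite /cc mulr_ge0 // divr_ge0 ?ler0n //.
by rewrite subr_ge0 ltW.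
Qed.

Lemma Pos_step th st : Pos st -> Pos (pr_step E m th st).
Proof.
move=> hp i; rewrite /pr_step /=; case: eqP => // _.
by case: ifP => _ //; rewrite addr_ge0 // cc_ge0.
Qed.

Definition Inv (st : ('I_n -> R) * ('I_n -> R)) := forall i,
  xs i - st.1 i = (1 - m) * \sum_j hyperlink R E i j * (xs j - st.1 j + st.2 j).

Lemma Inv_step th st : Inv st -> Inv (pr_step E m th st).
Proof.
move=> hI i.
have -> : \sum_j hyperlink R E i j * (xs j - (pr_step E m th st).1 j + (pr_step E m th st).2 j)
  = \sum_j hyperlink R E i j * (xs j - st.1 j + st.2 j) - \sum_j (j == th)%:R * (hyperlink R E i j * st.2 th).
  rewrite -sumrB; apply: eq_bigr => j _; rewrite step1 step2.
  ring.
rewrite sum_delta mulrBr -hI step1 Aij /cc.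
have := outdeg_neq0 th; move: (outdeg E th)%:R => d hd.
by field.
Qed.

Lemma Inv_nonneg st : Inv st -> Pos st -> forall i, st.1 i <= xs i.
Proof.
move=> hI hP.
pose v i := Num.max (st.1 i - xs i) 0.
have v0 i : 0 <= v i by rewrite /v le_max lexx orbT.
have hv i : v i <= (1 - m) * \sum_j hyperlink R E i j * v j.
  have hs : 0 <= (1 - m) * \sum_j hyperlink R E i j * v j.
    apply: mulr_ge0; first by rewrite subr_ge0 ltW.
    apply: sumr_ge0 => j _.
    by rewrite mulr_ge0 // Aij mulr_ge0 ?invr_ge0 ?ler0n.
  rewrite /v ge_max hs andbT.
  have -> : st.1 i - xs i = - (xs i - st.1 i) by rewrite opprB.
  rewrite hI -mulrN; apply: ler_wpM2l; first by rewrite subr_ge0 ltW.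
  rewrite -sumrN; apply: ler_sum => j _.
  rewrite -mulrN ler_wpM2l ?Aij ?mulr_ge0 ?invr_ge0 ?ler0n //.
  rewrite /v le_max; apply/orP; left.
  by rewrite opprD opprB lerBlDr lerDl hP.
have hsum : \sum_i v i <= (1 - m) * \sum_i v i.
  have h1 : \sum_i v i <= \sum_i (1 - m) * \sum_j hyperlink R E i j * v j.
    by rewrite ler_sum.
  apply: le_trans h1 _.
  rewrite -mulr_sumr exchange_big /=; apply: ler_wpM2l; first by rewrite subr_ge0 ltW.
  by rewrite le_eqVlt; apply/orP; left; apply/eqP; apply: eq_bigr => j _; rewrite -mulr_suml colsum mul1r.
have h0 : \sum_i v i = 0.
  apply/eqP; rewrite eq_le sumr_ge0 // andbT.
  have : m * \sum_i v i <= 0 by move: hsum; move: (\sum_i v i) => a; lra.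
  by rewrite pmulr_rle0.
move=> i.
have /eqP := h0; rewrite psumr_eq0 // => /allP /(_ i (mem_index_enum i)) /= /eqP.
rewrite /v => hvi.
have : st.1 i - xs i <= 0 by rewrite -hvi le_max lexx.
by rewrite subr_le0.
Qed.

Lemma Inv_sum st : Inv st -> m * \sum_i (xs i - st.1 i) = (1 - m) * zsum st.
Proof.
move=> hI.
have e : \sum_i (xs i - st.1 i) = (1 - m) * \sum_j (xs j - st.1 j + st.2 j).
  transitivity (\sum_i (1 - m) * \sum_j hyperlink R E i j * (xs j - st.1 j + st.2 j)).
    by apply: eq_bigr => i _; exact: hI.
  rewrite -mulr_sumr exchange_big /=; congr (_ * _); apply: eq_bigr => j _.
  by rewrite -mulr_suml colsum mul1r.
rewrite [X in _ = _ * X]big_split /= in e.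
move: e; rewrite /zsum; move: (\sum_i _) (\sum_i st.2 i) => a b h.
have -> : m * a = a - (1 - m) * a by ring.
by rewrite {1}h; ring.
Qed.

Lemma state_Pos th k : Pos (pr_state E m th k).
Proof.
elim: k => [|k IH] /=; last exact: Pos_step.
by move=> i /=; rewrite divr_ge0 ?ler0n ?ltW.
Qed.

Lemma state_Inv th k : Inv (pr_state E m th k).
Proof.
elim: k => [|k IH] /=; last exact: Inv_step.
move=> i /=; under eq_bigr do rewrite subrK.
by rewrite {1}hfix addrK.
Qed.

Lemma state_zsum0 th : (0 < n)%N -> zsum (pr_state E m th 0) = m.
Proof.
move=> hn; rewrite /zsum /= sumr_const card_ord -[_ *+ n]mulr_natr.
have : (n%:R : R) != 0 by rewrite pnatr_eq0 -lt0n.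
move: (n%:R : R) => a ha; by field.
Qed.

Lemma state_ext th th' k : (forall j, (j < k)%N -> th j = th' j) ->
  pr_state E m th k = pr_state E m th' k.
Proof.
elim: k => [//|k IH] h /=.
by rewrite h // IH // => j hj; apply: h; apply: ltnW.
Qed.

Lemma zsum_ge0 th k : 0 <= zsum (pr_state E m th k).
Proof. by apply: sumr_ge0 => i _; apply: state_Pos. Qed.

Lemma zsum_mono th k k' : (k <= k')%N ->
  zsum (pr_state E m th k') <= zsum (pr_state E m th k).
Proof.
elim: k' => [|k' IH]; first by rewrite leqn0 => /eqP ->.
rewrite leq_eqVlt => /orP [/eqP ->//|hk].
apply: le_trans (IH hk).
have -> : pr_state E m th k'.+1 = pr_step E m (th k') (pr_state E m th k') by [].
rewrite zsum_step lerBlDr lerDl.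
exact: mulr_ge0 (ltW m0) (state_Pos _ _ _).
Qed.

Lemma x_mono th k i : (pr_state E m th k).1 i <= (pr_state E m th k.+1).1 i.
Proof.
have -> : pr_state E m th k.+1 = pr_step E m (th k) (pr_state E m th k) by [].
by rewrite step1 lerDl mulr_ge0 ?ler0n // cc_ge0 //; apply: state_Pos.
Qed.

Lemma x_ge0 th k i : 0 <= (pr_state E m th k).1 i.
Proof.
elim: k => [|k IH]; first by rewrite /= divr_ge0 ?ler0n ?ltW.
exact: le_trans IH (x_mono _ _ _).
Qed.

Lemma x_le th k i : (pr_state E m th k).1 i <= xs i.
Proof. by apply: Inv_nonneg; [apply: state_Inv | apply: state_Pos]. Qed.

Lemma w_bound th k i :
  xs i - (pr_state E m th k).1 i <= (1 - m) / m * zsum (pr_state E m th k).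
Proof.
set st := pr_state E m th k.
have -> : (1 - m) / m * zsum st = \sum_j (xs j - st.1 j).
  have h := @Inv_sum st (state_Inv th k).
  rewrite -/st in h; rewrite mulrAC -h mulrC mulrA mulVf ?mul1r //.
  by rewrite gt_eqF.
rewrite (bigD1 i) //= lerDl; apply: sumr_ge0 => j _.
by rewrite subr_ge0 x_le.
Qed.

Variable d0 : 'I_n.

Fixpoint Lk k : seq (seq 'I_n) :=
  if k is k'.+1 then [seq rcons s i | s <- Lk k', i <- enum 'I_n] else [:: [::]].

Lemma mem_Lk k s : (s \in Lk k) = (size s == k).
Proof.
elim: k s => [|k IH] s /=; first by rewrite inE; case: s.
apply/allpairsP/idP => [[[s' i] [h1 h2 ->]]|]; first by rewrite size_rcons eqSS -IH.
case/lastP: s => [//|s' i]; rewrite size_rcons eqSS => h.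
by exists (s', i); split; rewrite ?IH ?mem_enum.
Qed.

Lemma uniq_Lk k : uniq (Lk k).
Proof.
elim: k => [//|k IH] /=.
apply: allpairs_uniq => //; first exact: enum_uniq.
move=> [s i] [s' i'] _ _ /= /eqP; rewrite eqseq_rcons => /andP[/eqP-> /eqP->] //.
Qed.

Lemma size_Lk k : size (Lk k) = (n ^ k)%N.
Proof.
elim: k => [//|k IH] /=.
by rewrite size_allpairs IH size_enum_ord expnSr.
Qed.

Lemma sum_Lk (F : seq 'I_n -> R) k :
  \sum_(s <- Lk k.+1) F s = \sum_(s <- Lk k) \sum_i F (rcons s i).
Proof.
rewrite /= big_allpairs_dep; apply: eq_bigr => s _.
by rewrite big_enum.
Qed.

Lemma stepS s i k : size s = k ->
  pr_state E m (nth d0 (rcons s i)) k.+1 = pr_step E m i (pr_state E m (nth d0 s) k).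
Proof.
move=> hs; rewrite /= nth_rcons hs ltnn eqxx; congr pr_step.
by apply: state_ext => j hj; rewrite nth_rcons hs hj.
Qed.

Definition Z k := \sum_(s <- Lk k) zsum (pr_state E m (nth d0 s) k).

Lemma Z_eq k : (0 < n)%N -> Z k = m * (n%:R - m) ^+ k.
Proof.
move=> hn; elim: k => [|k IH]; first by rewrite /Z /= big_seq1 state_zsum0 // expr0 mulr1.
rewrite /Z sum_Lk big_seq.
transitivity (\sum_(s <- Lk k | s \in Lk k) (n%:R - m) * zsum (pr_state E m (nth d0 s) k)).
  apply: eq_bigr => s; rewrite mem_Lk => /eqP hs.
  under eq_bigr do rewrite stepS // zsum_step.
  rewrite sumrB sumr_const card_ord -mulr_sumr.
  by rewrite /zsum mulrBl mulr_natl.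
by rewrite -big_seq -mulr_sumr -/(Z k) IH exprS; ring.
Qed.

Lemma W_eq k : \sum_(s <- Lk k) \sum_i (xs i - (pr_state E m (nth d0 s) k).1 i)
  = (1 - m) / m * Z k.
Proof.
rewrite /Z mulr_sumr; apply: eq_bigr => s _.
have h := @Inv_sum _ (state_Inv (nth d0 s) k).
by rewrite mulrAC -h mulrC mulrA mulVf ?mul1r // gt_eqF.
Qed.

End Det.

Section Prob.
Variables (R : realType) (n : nat) (d : measure_display) (T : measurableType d)
  (P : probability T R) (theta : nat -> T -> 'I_n) (d0 : 'I_n).
Hypothesis hiid : iid_uniform_seq P theta.

Definition pre k t := mkseq (fun j => theta j t) k.
Definition cyl (s : seq 'I_n) :=
  \big[setI/setT]_(j <- iota 0 (size s)) (theta j @^-1` [set nth d0 s j]).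

Lemma bigI_mem (r : seq nat) (F : nat -> set T) t :
  (\big[setI/setT]_(j <- r) F j) t <-> (forall j, j \in r -> F j t).
Proof.
elim: r => [|a r IH]; first by rewrite big_nil; split => // _ j; rewrite in_nil.
rewrite big_cons; split.
  move=> [ha hr] j; rewrite inE => /orP [/eqP -> //| hj]; exact: (IH.1 hr j hj).
move=> h; split; first by apply: h; rewrite mem_head.
by apply/IH => j hj; apply: h; rewrite inE hj orbT.
Qed.

Lemma bigU_mem (r : seq (seq 'I_n)) (Q : pred (seq 'I_n)) (F : seq 'I_n -> set T) t :
  (\big[setU/set0]_(s <- r | Q s) F s) t <-> exists s, [/\ s \in r, Q s & F s t].
Proof.
elim: r => [|a r IH]; first by rewrite big_nil; split => // -[s []].
rewrite big_cons; case: ifP => hq; last first.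
  rewrite IH; split => -[s [h1 h2 h3]]; exists s; split => //.
    by rewrite inE h1 orbT.
  move: h1; rewrite inE => /orP [/eqP hs|//]; by rewrite hs hq in h2.
split.
  move=> [hF|/IH [s [h1 h2 h3]]]; first by exists a; rewrite mem_head.
  by exists s; rewrite inE h1 orbT.
move=> [s [h1 h2 h3]]; move: h1; rewrite inE => /orP [/eqP hs|hs].
  by left; rewrite -hs.
by right; apply/IH; exists s.
Qed.

Lemma cyl_pre s k t : size s = k -> cyl s t <-> s = pre k t.
Proof.
move=> hs; rewrite /cyl bigI_mem; split.
  move=> h; apply: (@eq_from_nth _ d0); first by rewrite size_mkseq.
  move=> j hj; rewrite nth_mkseq -?hs //; symmetry.
  by have := h j; rewrite mem_iota add0n hj => /(_ isT).
move=> -> j; rewrite mem_iota size_mkseq add0n => hj /=.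
by rewrite nth_mkseq.
Qed.

Lemma cyl_meas s : measurable (cyl s).
Proof. by apply: bigsetI_measurable => j _; case: hiid => h _; apply: h. Qed.

Lemma cyl_P s : P (cyl s) = ((n%:R^-1) ^+ size s)%:E.
Proof.
case: hiid => _ [h2 h3].
rewrite /cyl h3 ?iota_uniq //.
under eq_bigr do rewrite h2.
rewrite prodEFin; congr _%:E.
rewrite big_const_seq count_predT size_iota.
by elim: (size s) => //= k ->; rewrite exprS.
Qed.

Lemma int_pre k (g : seq 'I_n -> R) : (forall s, 0 <= g s) ->
  (\int[P]_(t in setT) (g (pre k t))%:E)%E
  = (\sum_(s <- Lk n k) g s * (n%:R^-1) ^+ k)%:E.
Proof.
move=> g0.
transitivity (\int[P]_(t in setT) (\sum_(s <- Lk n k) (g s * \1_(cyl s) t)%:E))%E.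
  apply: eq_integral => t _; rewrite sumEFin; congr _%:E.
  have hm : pre k t \in Lk n k by rewrite mem_Lk size_mkseq.
  rewrite (bigD1_seq (pre k t)) ?uniq_Lk //= indicE mem_set ?mulr1; last first.
    by apply/cyl_pre; rewrite ?size_mkseq.
  rewrite big1_seq ?addr0 // => s /andP [hne hs].
  rewrite indicE memNset ?mulr0 //.
  move=> hc; rewrite mem_Lk in hs; move/eqP: hs => hs; have hst := (@cyl_pre s k t hs).1 hc.
  by rewrite hst eqxx in hne.
rewrite ge0_integral_sum //; last first.
  move=> s t _; rewrite lee_fin mulr_ge0 // indicE ler0n //.
  move=> s; apply/measurable_realfun.measurable_EFinP; apply: measurable_realfun.measurable_funM.
    exact: measurable_cst.
  exact: measurable_realfun.measurable_indic (cyl_meas s).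
rewrite -sumEFin big_seq [in RHS]big_seq; apply: eq_bigr => s hs.
rewrite (eq_integral (fun t => (g s)%:E * (\1_(cyl s) t)%:E)%E); last first.
  by move=> t _; rewrite EFinM.
have hmi : measurable_fun [set: T] (EFin \o (\1_(cyl s) : T -> R)).
  by apply/measurable_realfun.measurable_EFinP; exact: measurable_realfun.measurable_indic (cyl_meas s).
have hpi : forall t, setT t -> (0 <= (\1_(cyl s) t : R)%:E)%E.
  by move=> t _; rewrite lee_fin indicE ler0n.
rewrite ge0_integralZl_EFin //.
rewrite integral_indic ?cyl_meas //.
have -> : cyl s `&` setT = cyl s by apply: setIT.
transitivity ((g s)%:E * ((n%:R^-1) ^+ size s)%:E)%E.
  by congr (_ * _)%E; exact: cyl_P s.
rewrite -EFinM.
  by move: hs; rewrite mem_Lk => /eqP ->.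
exact: cyl_meas.
Qed.

Lemma pre_meas k (Q : pred (seq 'I_n)) : measurable [set t | Q (pre k t)].
Proof.
rewrite (_ : [set t | Q (pre k t)] = \big[setU/set0]_(s <- Lk n k | Q s) cyl s).
  by apply: bigsetU_measurable => s _; exact: cyl_meas.
apply/seteqP; split => t /=.
  move=> hq; apply/bigU_mem; exists (pre k t); split => //.
    by rewrite mem_Lk size_mkseq.
  by apply/cyl_pre; rewrite ?size_mkseq.
move/bigU_mem => [s [h1 h2 h3]].
move: h1; rewrite mem_Lk => /eqP hs.
by rewrite -((@cyl_pre s k t hs).1 h3).
Qed.

Lemma P_pre k (Q : pred (seq 'I_n)) :
  P [set t | Q (pre k t)] = (\sum_(s <- Lk n k) (Q s)%:R * (n%:R^-1) ^+ k)%:E.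
Proof.
rewrite -(@int_pre k (fun s => (Q s)%:R)); last by move=> s; rewrite ler0n.
transitivity (\int[P]_(t in setT) (\1_([set t | Q (pre k t)]) t : R)%:E)%E; last first.
  apply: eq_integral => t _; rewrite indicE; congr (_%:R)%:E.
  case: (boolP (Q (pre k t))) => h; first by rewrite mem_set.
  by rewrite memNset //= => h'; rewrite h' in h.
rewrite integral_indic ?pre_meas //; last exact: pre_meas.
by congr (P _); symmetry; apply: setIT.
Qed.

End Prob.

Lemma sum_const_seq (R : realType) (T : Type) (r : seq T) (c : R) :
  \sum_(s <- r) c = c *+ size r.
Proof. by elim: r => [|a r IH]; rewrite ?big_nil ?big_cons ?IH ?mulrS. Qed.

Theorem theorem1 (R : realType) (n : nat) (E : rel 'I_n) (m : R)
  (xstar : 'cV[R]_n)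
  (d : measure_display) (T : measurableType d) (P : probability T R)
  (theta : nat -> T -> 'I_n) :
  (2 <= n)%N ->
  (forall i : 'I_n, ~~ E i i) ->
  (forall j : 'I_n, (1 <= outdeg E j)%N) ->
  0 < m < 1 ->
  xstar = (1 - m) *: (hyperlink R E *m xstar) + (m / n%:R) *: const_mx 1 ->
  \sum_(i < n) xstar i ord0 = 1 ->
  iid_uniform_seq P theta ->
  let x := fun (k : nat) (t : T) => pr_x E m (fun j => theta j t) k in
  let Ex := fun (k : nat) (i : 'I_n) => fine (\int[P]_(t in setT) (x k t i)%:E) in
  {ae P, forall t, forall i : 'I_n, (fun k => x k t i) @ \oo --> xstar i ord0}
  /\ (forall t k (i : 'I_n), x k t i <= x k.+1 t i <= xstar i ord0)
  /\ (forall i : 'I_n, (fun k => Ex k i) @ \oo --> xstar i ord0)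
  /\ (exists (C rho : R), 0 < C /\ 0 < rho < 1 /\
        forall k, \sum_(i < n) `|Ex k i - xstar i ord0| <= C * rho ^+ k).
Proof.
move=> hn2 noloop deg1 /andP[m0 m1] hx _ hiid x Ex.
have hn : (0 < n)%N by apply: leq_trans hn2.
pose d0 : 'I_n := Ordinal hn.
pose xs i := xstar i ord0.
have hfix : forall i, xs i = (1 - m) * \sum_j hyperlink R E i j * xs j + m / n%:R.
  by move=> i; rewrite /xs {1}hx !mxE mulr1.
have stE : forall k t, pr_state E m (fun j => theta j t) k
    = pr_state E m (nth d0 (pre n d T theta k t)) k.
  by move=> k t; apply: state_ext => j hj; rewrite nth_mkseq.
pose q k := (n%:R^-1 : R) ^+ k.
have nR0 : (n%:R : R) != 0 by rewrite pnatr_eq0 -lt0n.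
have ExE : forall k i, Ex k i = \sum_(s <- Lk n k) (pr_state E m (nth d0 s) k).1 i * q k.
  move=> k i; rewrite /Ex /x /pr_x.
  under eq_integral => t _ do rewrite stE.
  rewrite (@int_pre R n d T P theta d0 hiid k (fun s => (pr_state E m (nth d0 s) k).1 i)) //.
  by move=> s; apply: x_ge0.
have Sq : forall k, \sum_(s <- Lk n k) q k = 1.
  move=> k; rewrite sum_const_seq size_Lk /q -[_ *+ _]mulr_natr natrX -exprMn mulVf //.
  by rewrite expr1n.
pose rho := (n%:R - m) / n%:R.
have nge2 : (2 : R) <= n%:R by rewrite (ler_nat R 2 n).
have rho0 : 0 < rho by rewrite /rho divr_gt0 //; lra.
have rho1 : rho < 1 by rewrite /rho ltr_pdivrMr ?mul1r; lra.
have bnd : forall k, \sum_i `|Ex k i - xs i| = (1 - m) * rho ^+ k.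
  move=> k.
  transitivity (\sum_i (xs i - Ex k i)).
    apply: eq_bigr => i _; rewrite distrC ger0_norm // subr_ge0 ExE.
    apply: (@le_trans _ _ (\sum_(s <- Lk n k) q k * xs i)); last by rewrite -mulr_suml; have -> : \sum_(s <- Lk n k) q k = 1 := Sq k; rewrite mul1r.
    apply: ler_sum => s _.
    rewrite mulrC ler_wpM2l ?exprn_ge0 ?invr_ge0 ?ler0n //.
    exact: x_le.
  transitivity (q k * \sum_(s <- Lk n k) \sum_i (xs i - (pr_state E m (nth d0 s) k).1 i)).
    rewrite mulr_sumr; under [RHS]eq_bigr do rewrite mulr_sumr.
    rewrite exchange_big /=; apply: eq_bigr => i _.
    rewrite ExE; under eq_bigr do rewrite mulrBr.
    rewrite sumrB.
    have -> : \sum_(s <- Lk n k) q k * xs i = xs i by rewrite -mulr_suml (Sq k) mul1r.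
    by congr (_ - _); apply: eq_bigr => s _; rewrite mulrC.
  rewrite (@W_eq R n E m xs noloop deg1 m0 hfix d0 k) (@Z_eq R n E m noloop deg1 d0 k hn) /rho /q exprMn.
  have : m != 0 by rewrite gt_eqF.
  move: (n%:R^-1 ^+ k) ((n%:R - m) ^+ k) => a b hm.
  by field.
have ple : forall k i, `|xs i - Ex k i| <= rho ^+ k.
  move=> k i; apply: le_trans (_ : (1 - m) * rho ^+ k <= _); last first.
    by rewrite ler_piMl ?exprn_ge0 ?ltW //; lra.
  rewrite -bnd (bigD1 i) //= distrC lerDl.
  by apply: sumr_ge0 => j _.
split; last split; last split.
- pose Q j k := fun s : seq 'I_n => j.+1%:R^-1 <= zsum R n (pr_state E m (nth d0 s) k).
  pose A j k := [set t | Q j k (pre n d T theta k t)].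
  have hA : forall j k, measurable (A j k).
    by move=> j k; exact: (@pre_meas R n d T P theta d0 hiid k (Q j k)).
  have PA : forall j k, (P (A j k) <= (j.+1%:R * m * rho ^+ k)%:E)%E.
    move=> j k; rewrite /A (@P_pre R n d T P theta d0 hiid k (Q j k)) lee_fin.
    apply: (@le_trans _ _ (\sum_(s <- Lk n k) (j.+1%:R * zsum R n (pr_state E m (nth d0 s) k)) * q k)).
      apply: ler_sum => s _; apply: ler_wpM2r; first by rewrite exprn_ge0 ?invr_ge0 ?ler0n.
      case: (boolP (Q j k s)) => h /=; last first.
        by apply: mulr_ge0; [exact: ler0n | exact: (@zsum_ge0 R n E m m0 m1)].
      have hj0 : 0 < (j.+1%:R : R) by rewrite ltr0Sn.
      apply: (@le_trans _ _ (j.+1%:R * j.+1%:R^-1)); first by rewrite mulfV ?gt_eqF.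
      by apply: ler_wpM2l; [exact: ltW | exact: h].
    under eq_bigr do rewrite mulrAC.
    rewrite -mulr_sumr -/(Z R n E m d0 k) (@Z_eq R n E m noloop deg1 d0 k hn) /rho /q exprMn.
    by rewrite le_eqVlt; apply/orP; left; apply/eqP; ring.
  have hcap : forall j, P (\bigcap_k A j k) = 0%E.
    move=> j.
    have hm : measurable (\bigcap_k A j k) by apply: bigcapT_measurable => k; exact: hA.
    have hle : forall k, (P (\bigcap_k A j k) <= (j.+1%:R * m * rho ^+ k)%:E)%E.
      move=> k; apply: le_trans (PA j k); apply: le_measure.
      + exact: mem_set hm.
      + exact: mem_set (hA j k).
      + exact: bigcap_inf.
    have hfin : P (\bigcap_k A j k) \is a fin_num.
      by rewrite ge0_fin_numE ?measure_ge0 // (le_lt_trans (hle 0%N)) ?ltry.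
    apply/eqP; rewrite eq_le measure_ge0 andbT -(fineK hfin) lee_fin.
    rewrite leNgt; apply/negP => ha.
    have hr : `|rho| < 1 by rewrite ger0_norm ?ltW.
    have := cvg_geometric (j.+1%:R * m) hr.
    move/cvgrPdist_lt => /(_ _ ha) [N _ hN].
    have := hN N (leqnn N); rewrite /geometric /= sub0r normrN => h2.
    have := hle N; rewrite -(fineK hfin) lee_fin => h1.
    by have := le_lt_trans (le_trans h1 (ler_norm _)) h2; rewrite ltxx.
  have hN : P.-negligible (\bigcup_j \bigcap_k A j k).
    apply: negligible_bigcup => j; exists (\bigcap_k A j k); split => //.
      by apply: bigcapT_measurable => k; exact: hA.
    exact: hcap.
  apply: (negligibleS _ hN) => t /= hnc; apply: contrapT => hNt; apply: hnc => i.
  have hz : forall j, exists k, zsum R n (pr_state E m (nth d0 (pre n d T theta k t)) k) < j.+1%:R^-1.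
    move=> j; apply: contrapT => hj; apply: hNt; exists j => // k _.
    rewrite /A /Q /= leNgt; apply/negP => hlt; apply: hj; by exists k.
  apply/cvgrPdist_le => e he.
  have [j hj] : exists j : nat, 0 + j.+1%:R^-1 < e * m / (1 - m).
    by apply: ltr_add_invr; rewrite divr_gt0 ?mulr_gt0 // subr_gt0.
  rewrite add0r in hj.
  have [k0 hk0] := hz j.
  exists k0 => // k /= hk.
  rewrite /x /pr_x ger0_norm ?subr_ge0; last exact: (@x_le R n E m xs noloop deg1 m0 m1 hfix).
  apply: le_trans (@w_bound R n E m xs noloop deg1 m0 m1 hfix (fun j => theta j t) k i) _.
  have hzk : zsum R n (pr_state E m (fun j => theta j t) k) <= e * m / (1 - m).
    apply: le_trans (@zsum_mono R n E m noloop deg1 m0 m1 _ k0 k hk) _.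
    by rewrite stE; apply: ltW; exact: lt_trans hk0 hj.
  have hc : 0 <= (1 - m) / m by rewrite divr_ge0 ?subr_ge0 ?ltW.
  apply: le_trans (ler_wpM2l hc hzk) _.
  have : m != 0 by rewrite gt_eqF.
  have : 1 - m != 0 by rewrite gt_eqF // subr_gt0.
  move=> h1 h2; rewrite le_eqVlt; apply/orP; left; apply/eqP.
  have E0 : forall e0 : R, (1 - m) / m * (e0 * m / (1 - m)) = e0.
    by move=> e0; field; rewrite h1 h2.
  exact: E0.
- move=> t k i; rewrite /x /pr_x; apply/andP; split.
    exact: x_mono.
  exact: (@x_le R n E m xs noloop deg1 m0 m1 hfix).
- move=> i; apply/cvgrPdist_le => e he.
  have hr : `|rho| < 1 by rewrite ger0_norm ?ltW.
  have := cvg_geometric 1 hr.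
  move/cvgrPdist_le => /(_ e he) [N _ hN].
  exists N => // k /= hk.
  apply: le_trans (ple k i) _.
  have := hN k hk; rewrite /geometric /= sub0r normrN mul1r ger0_norm //.
  exact: exprn_ge0 (ltW rho0).
- exists 1, rho; split; first exact: ltr01.
  split; first by rewrite rho0 rho1.
  move=> k; rewrite bnd mul1r ler_piMl ?exprn_ge0 ?ltW //; lra.
Qed.
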